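(* Let $0 \le \eta \le 1$ and let $X$ be a Bernoulli random variable with $P_\theta(X=1) = 1 - P_\theta(X=0) = \theta$, where the parameter $\theta$ is known to lie in $\Omega = \{\theta : 0 \le \theta \le \eta\}$. Consider estimators $\delta(X)$ of $\theta$ (i.e., real-valued functions of $X$) under the squared error loss $L(\theta,d) = (\theta-d)^2$. Then a minimax estimator, i.e., an estimator $\delta$ minimizing $$\sup_{0\le\theta\le\eta} \mathbf{E}_\theta\big(\theta - \delta(X)\big)^2,$$ equivalently a pair of real numbers $(a,b)=(\delta(0),\delta(1))$ minimizing $$\sup_{0\le\theta\le\eta}\Big[(2a-2b+1)\theta^2 + (b^2-a^2-2a)\theta + a^2\Big],$$ is given by $$\delta(X=0) = a^* = \begin{cases} \sqrt{1-\eta} - (1-\eta) & \text{if } 0 \le \eta \le \tfrac34,\\ \tfrac14 & \text{if } \tfrac34 < \eta \le 1,\end{cases}$$ and $$\delta(X=1) = b^* = \min\{\eta, \tfrac34\} = \begin{cases} \eta & \text{if } \eta \le \tfrac34,\\ \tfrac34 & \text{if } \eta > \tfrac34.\end{cases}$$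
   Context: Based on a single observation $X$ (sample size $n=1$). An estimator is determined by its two values $\delta(0)=a$ and $\delta(1)=b$, and its risk is $\mathbf{E}_\theta(\theta-\delta(X))^2 = (\theta-a)^2(1-\theta) + (\theta-b)^2\theta$. *)

(* Defs.v *)
From HB Require Import structures.
From mathcomp Require Import all_boot all_order all_algebra.
From mathcomp Require Import classical_sets reals.
Set Implicit Arguments. Unset Strict Implicit. Unset Printing Implicit Defensive.
Import Order.TTheory GRing.Theory Num.Theory.
Local Open Scope ring_scope.
Local Open Scope classical_set_scope.

(* An estimator based on one Bernoulli observation X in {0,1}:
   delta false = delta(0), delta true = delta(1). *)
Definition estimator (R : realType) := bool -> R.

Definition bern_prob (R : realType) (theta : R) (x : bool) : R :=
  if x then theta else 1 - theta.

Definition risk (R : realType) (delta : estimator R) (theta : R) : R :=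
  bern_prob theta false * (theta - delta false) ^+ 2
  + bern_prob theta true * (theta - delta true) ^+ 2.

Definition max_risk (R : realType) (eta : R) (delta : estimator R) : R :=
  sup [set r | exists theta : R, 0 <= theta <= eta /\ r = risk delta theta].

Definition minimax (R : realType) (eta : R) (delta : estimator R) : Prop :=
  forall delta' : estimator R, max_risk eta delta <= max_risk eta delta'.

Definition a_star (R : realType) (eta : R) : R :=
  if eta <= 3 / 4 then Num.sqrt (1 - eta) - (1 - eta) else 1 / 4.

Definition b_star (R : realType) (eta : R) : R := Num.min eta (3 / 4).

Definition delta_star (R : realType) (eta : R) : estimator R :=
  fun x => if x then b_star eta else a_star eta.

(* Main.v *)
Require Import Defs.
From HB Require Import structures.
From mathcomp Require Import all_boot all_order all_algebra.
From mathcomp Require Import classical_sets reals.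
From mathcomp Require Import ring lra.
Import Order.TTheory GRing.Theory Num.Theory.
Local Open Scope ring_scope.

Lemma risk_bound (R : realType) (d : estimator R) (t : R) :
  0 <= t <= 1 -> risk d t <= 4 + 2 * d false ^+ 2 + 2 * d true ^+ 2.
Proof.
case/andP=> t0 t1; rewrite /risk /bern_prob /=.
set a := d false; set b := d true.
have tt : t ^+ 2 <= 1 by nra.
have h1 : (t - a) ^+ 2 <= 2 + 2 * a ^+ 2.
  have : 0 <= (t + a) ^+ 2 by apply: sqr_ge0.
  have -> : (t - a) ^+ 2 = 2 * t ^+ 2 + 2 * a ^+ 2 - (t + a) ^+ 2 by ring.
  lra.
have h2 : (t - b) ^+ 2 <= 2 + 2 * b ^+ 2.
  have : 0 <= (t + b) ^+ 2 by apply: sqr_ge0.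
  have -> : (t - b) ^+ 2 = 2 * t ^+ 2 + 2 * b ^+ 2 - (t + b) ^+ 2 by ring.
  lra.
have q1 : 0 <= (t - a) ^+ 2 by apply: sqr_ge0.
have q2 : 0 <= (t - b) ^+ 2 by apply: sqr_ge0.
nra.
Qed.

Lemma key (R : realType) (eta : R) (V : R) : 0 <= eta -> eta <= 1 ->
  (forall t, 0 <= t <= eta -> risk (delta_star eta) t <= V) ->
  (forall d : estimator R, exists t, 0 <= t <= eta /\ V <= risk d t) ->
  minimax eta (delta_star eta).
Proof.
move=> e0 e1 up low d; rewrite /max_risk.
apply: (@le_trans _ _ V).
  apply: ge_sup; first by exists (risk (delta_star eta) 0), 0; rewrite lexx e0.
  by move=> y [t [ht ->]]; apply: up.
have [t [ht hV]] := low d.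
apply: le_trans hV _.
apply: ub_le_sup; last by exists t.
exists (4 + 2 * d false ^+ 2 + 2 * d true ^+ 2) => y [s [hs ->]].
apply: risk_bound; case/andP: hs => s0 s1; apply/andP; split => //.
exact: le_trans s1 e1.
Qed.

Theorem theorem1 (R : realType) (eta : R) (h0 : 0 <= eta) (h1 : eta <= 1) :
  minimax eta (delta_star eta).
Proof.
case: (lerP eta (3/4)) => he.
- set s := Num.sqrt (1 - eta).
  have s0 : 0 <= s by apply: sqrtr_ge0.
  have s2 : s ^+ 2 = 1 - eta by rewrite sqr_sqrtr // subr_ge0.
  have sh : 1/2 <= s by nra.
  apply: (@key _ _ (s ^+ 2 * (1 - s) ^+ 2)) => //.
  + move=> t /andP [t0 te].
    rewrite /risk /bern_prob /delta_star /a_star /b_star he.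
    have -> : Num.min eta (3/4) = eta by apply/min_idPl.
    rewrite -/s.
    have ee : eta = 1 - s ^+ 2 by rewrite s2; ring.
    have -> : (1 - t) * (t - (s - (1 - eta))) ^+ 2 + t * (t - eta) ^+ 2
       = s ^+ 2 * (1 - s) ^+ 2 + (2 * s - 1) * t * (t - eta).
      rewrite ee; ring.
    have p1 : 0 <= (2 * s - 1) * t by apply: mulr_ge0; lra.
    have p2 : 0 <= (2 * s - 1) * t * (eta - t) by apply: mulr_ge0; lra.
    lra.
  + move=> d; set a := d false; set b := d true.
    case: (lerP (s ^+ 2 * (1 - s) ^+ 2) (a ^+ 2)) => ha.
      exists 0; split; first by rewrite lexx h0.
      by rewrite /risk /bern_prob /=; rewrite -/a; nra.
    exists eta; split; first by rewrite lexx h0.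
    rewrite /risk /bern_prob /= -/a -/b.
    have ee : eta = 1 - s ^+ 2 by rewrite s2; ring.
    have s1 : s <= 1 by nra.
    have q : 0 <= eta * (eta - b) ^+ 2 by apply: mulr_ge0 => //; apply: sqr_ge0.
    have c0 : 0 <= s * (1 - s) by apply: mulr_ge0; lra.
    have ha' : a < s * (1 - s).
      case: (lerP (s * (1 - s)) a) => // hc.
      have : (s * (1 - s)) * (s * (1 - s)) <= a * a by apply: ler_pM.
      have e : s ^+ 2 * (1 - s) ^+ 2 = (s * (1 - s)) * (s * (1 - s)) by ring.
      move: ha; rewrite e expr2; lra.
    have d0 : 1 - s <= eta - a by rewrite ee; nra.
    have : (1 - s) ^+ 2 <= (eta - a) ^+ 2.
      rewrite !expr2; apply: ler_pM; lra.
    move=> h3.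
    have : s ^+ 2 * (1 - s) ^+ 2 <= s ^+ 2 * (eta - a) ^+ 2.
      apply: ler_wpM2l => //; apply: sqr_ge0.
    rewrite s2; lra.
- apply: (@key _ _ (1/16)) => //.
  + move=> t _.
    rewrite /risk /bern_prob /delta_star /a_star /b_star.
    rewrite /=.
    have -> : (eta <= 3/4) = false by apply/negbTE; rewrite -ltNge.
    have -> : Num.min eta (3/4) = 3/4 by apply/min_idPr; apply: ltW.
    have -> : (1 - t) * (t - 1 / 4) ^+ 2 + t * (t - 3 / 4) ^+ 2 = 1/16 :> R.
      by field.
    by [].
  + move=> d; set a := d false; set b := d true.
    case: (lerP (1/16) (a ^+ 2)) => ha.
      exists 0; split; first by rewrite lexx h0.
      by rewrite /risk /bern_prob /=; rewrite -/a; nra.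
    exists (3/4); split; first by apply/andP; split; lra.
    rewrite /risk /bern_prob /= -/a -/b.
    have q : 0 <= 3/4 * (3/4 - b) ^+ 2 by apply: mulr_ge0; [lra| apply: sqr_ge0].
    have ha' : a < 1/4.
      case: (lerP (1/4) a) => // hc.
      have : (1/4) * (1/4) <= a * a by apply: ler_pM; lra.
      move: ha; rewrite expr2; lra.
    have : (1/2) ^+ 2 <= (3/4 - a) ^+ 2 by rewrite !expr2; apply: ler_pM; lra.
    lra.
Qed.
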